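(* Let $\mu>0$, $L>0$, let $g:\mathbb{R}^n\to\mathbb{R}$ be $\mu$-strongly convex and $(L+\mu)$-smooth, let $h$ be proper closed convex, $\psi=g+h$, and run the ACG method (see context) from $x_0\in\mathbb{R}^n$. Then for every $j\ge0$: (a) $\gamma_j\le\tilde\gamma_j\le\psi$, $\tilde\gamma_j(\tilde y_{j+1})=\gamma_j(\tilde y_{j+1})$, and $$\min_{u\in\mathbb{R}^n}\left\{\tilde\gamma_j(u)+\tfrac L2\|u-\tilde x_j\|^2\right\}=\min_{u\in\mathbb{R}^n}\left\{\gamma_j(u)+\tfrac L2\|u-\tilde x_j\|^2\right\},$$ with both minimization problems having $\tilde y_{j+1}$ as unique optimal solution; (b) $\gamma_j$ and $\Gamma_{j+1}$ are $\mu$-strongly convex quadratic functions; (c) $x_j=\mathrm{argmin}_{u\in\mathbb{R}^n}\{A_j\Gamma_j(u)+\|u-x_0\|^2/2\}$.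
   Context: $\ell_g(u;x)=g(x)+\langle\nabla g(x),u-x\rangle$. ACG method: $A_0=0$, $\tau_0=1/L$, $y_0=x_0$; for $j\ge0$: $a_j=\frac{\tau_j+\sqrt{\tau_j^2+4\tau_jA_j}}{2}$, $\tau_{j+1}=\tau_j+\mu a_j/L$, $A_{j+1}=A_j+a_j$, $\tilde x_j=\frac{A_j}{A_{j+1}}y_j+\frac{a_j}{A_{j+1}}x_j$; $\tilde y_{j+1}=\mathrm{argmin}_u\{\ell_g(u;\tilde x_j)+h(u)+\frac{L+\mu}{2}\|u-\tilde x_j\|^2\}$; $y_{j+1}\in\mathrm{Argmin}\{\psi(u):u\in\{y_j,\tilde y_{j+1}\}\}$; $x_{j+1}=\frac{(L+\mu)a_j\tilde y_{j+1}-\frac{A_ja_jL}{A_{j+1}}y_j}{A_{j+1}\mu+1}$. Define $\tilde\gamma_j(u)=\ell_g(u;\tilde x_j)+h(u)+\frac\mu2\|u-\tilde x_j\|^2$, $\gamma_j(u)=\tilde\gamma_j(\tilde y_{j+1})+L\langle\tilde x_j-\tilde y_{j+1},u-\tilde y_{j+1}\rangle+\frac\mu2\|u-\tilde y_{j+1}\|^2$, $\Gamma_0\equiv0$, $\Gamma_{j+1}=(A_j\Gamma_j+a_j\gamma_j)/A_{j+1}$. *)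

(* Defs.v *)
From HB Require Import structures.
From mathcomp Require Import all_boot all_order all_algebra.
From mathcomp Require Import all_classical all_reals all_analysis.
Set Implicit Arguments. Unset Strict Implicit. Unset Printing Implicit Defensive.
Import Order.TTheory GRing.Theory Num.Theory.
Import numFieldNormedType.Exports.
Local Open Scope ring_scope.

Section Defs.
Variables (R : realType) (n : nat).
Local Notation vec := 'rV[R]_n.

Definition dotv (u v : vec) : R := (u *m v^T) 0 0.
Definition sqn (u : vec) : R := dotv u u.
Definition enorm (u : vec) : R := Num.sqrt (sqn u).

Definition lin (g : vec -> R) (grad : vec -> vec) (x u : vec) : R :=
  (g x + dotv (grad x) (u - x)).

Definition is_gradient (g : vec -> R) (grad : vec -> vec) : Prop :=
  forall x, differentiable g x /\ forall v, 'd g x v = dotv (grad x) v.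

Definition strongly_convex (mu : R) (f : vec -> \bar R) : Prop :=
  forall (x y : vec) (t : R), (0 < t < 1) ->
    (f (t *: x + (1 - t) *: y)%R <=
      (t%:E * f x + (1 - t)%:E * f y) - (mu / 2 * t * (1 - t) * sqn (x - y))%:E)%E.

Definition convex_fun (f : vec -> \bar R) : Prop := strongly_convex 0 f.

Definition smooth_grad (L : R) (grad : vec -> vec) : Prop :=
  forall x y, (enorm (grad x - grad y) <= L * enorm (x - y)).

Definition proper_fun (f : vec -> \bar R) : Prop :=
  (forall x, f x != -oo%E) /\ (exists x, f x \is a fin_num).
Definition closed_fun (f : vec -> \bar R) : Prop := lower_semicontinuous f.

Definition quadratic (f : vec -> \bar R) : Prop :=
  exists (Q : 'M[R]_n) (b : vec) (c : R),
    forall u, f u = (c + dotv b u + 2^-1 * (u *m Q *m u^T) 0 0)%:E.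

Definition is_argmin (F : vec -> \bar R) (x : vec) : Prop := forall u, (F x <= F u)%E.
Definition unique_argmin (F : vec -> \bar R) (x : vec) : Prop :=
  is_argmin F x /\ forall u, is_argmin F u -> u = x.

Fixpoint ACG_Atau (mu L : R) (j : nat) : R * R :=
  match j with
  | 0 => (0, L^-1)
  | j.+1 => let (A, t) := ACG_Atau mu L j in
            let a := ((t + Num.sqrt (t ^+ 2 + 4 * t * A)) / 2) in
            ((A + a), (t + mu * a / L))
  end.
Definition ACG_A mu L j := (ACG_Atau mu L j).1.
Definition ACG_tau mu L j := (ACG_Atau mu L j).2.
Definition ACG_a mu L j : R :=
  ((ACG_tau mu L j + Num.sqrt (ACG_tau mu L j ^+ 2 + 4 * ACG_tau mu L j * ACG_A mu L j)) / 2).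

Definition ACG_run (mu L : R) (g : vec -> R) (grad : vec -> vec) (h : vec -> \bar R)
    (x0 : vec) (x y xt yt : nat -> vec) : Prop :=
  let A := ACG_A mu L in let a := ACG_a mu L in
  let psi := fun u => ((g u)%:E + h u)%E in
  x 0%N = x0 /\ y 0%N = x0 /\
  forall j : nat,
    xt j = (A j / A j.+1) *: y j + (a j / A j.+1) *: x j /\
    is_argmin (fun u => (lin g grad (xt j) u)%:E + h u
                        + ((L + mu) / 2 * sqn (u - xt j))%:E)%E (yt j.+1) /\
    (y j.+1 = y j \/ y j.+1 = yt j.+1) /\
    (psi (y j.+1) <= psi (y j))%E /\ (psi (y j.+1) <= psi (yt j.+1))%E /\
    x j.+1 = ((A j.+1 * mu + 1)^-1) *:
               ((L + mu) * a j *: yt j.+1 - (A j * a j * L / A j.+1) *: y j).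

Definition ACG_gammat (mu : R) g grad (h : vec -> \bar R) (xt : nat -> vec) j u :=
  ((lin g grad (xt j) u)%:E + h u + (mu / 2 * sqn (u - xt j))%:E)%E.
Definition ACG_gamma (mu L : R) g grad h (xt yt : nat -> vec) j u :=
  (ACG_gammat mu g grad h xt j (yt j.+1)
  + (L * dotv (xt j - yt j.+1) (u - yt j.+1) + mu / 2 * sqn (u - yt j.+1))%:E)%E.
Fixpoint ACG_Gamma (mu L : R) g grad h (xt yt : nat -> vec) j u : \bar R :=
  match j with
  | 0 => 0%E
  | j.+1 => (((ACG_A mu L j.+1)^-1)%:E *
              ((ACG_A mu L j)%:E * ACG_Gamma mu L g grad h xt yt j u
               + (ACG_a mu L j)%:E * ACG_gamma mu L g grad h xt yt j u))%E
  end.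

End Defs.

(* Main.v *)
Require Import Defs.
From HB Require Import structures.
From mathcomp Require Import all_boot all_order all_algebra.
From mathcomp Require Import all_classical all_reals all_analysis.
From mathcomp Require Import ring lra.
Import Order.TTheory GRing.Theory Num.Theory.
Import numFieldNormedType.Exports.
Local Open Scope classical_set_scope.
Local Open Scope ring_scope.

Section Dot.
Context {R : realType} {n : nat}.
Implicit Types (u v w : 'rV[R]_n) (a : R).

Lemma dotvC u v : dotv u v = dotv v u.
Proof. by rewrite /dotv -[in RHS](trmxK v) -trmx_mul [RHS]mxE. Qed.
Lemma dotvDl u v w : dotv (u + w) v = dotv u v + dotv w v.
Proof. by rewrite /dotv mulmxDl mxE. Qed.
Lemma dotvZl a u v : dotv (a *: u) v = a * dotv u v.
Proof. by rewrite /dotv -scalemxAl mxE. Qed.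
Lemma dotvNl u v : dotv (- u) v = - dotv u v.
Proof. by rewrite -scaleN1r dotvZl mulN1r. Qed.
Lemma dotvBl u v w : dotv (u - w) v = dotv u v - dotv w v.
Proof. by rewrite dotvDl dotvNl. Qed.
Lemma dotvDr u v w : dotv v (u + w) = dotv v u + dotv v w.
Proof. by rewrite dotvC dotvDl !(dotvC v). Qed.
Lemma dotvZr a u v : dotv v (a *: u) = a * dotv v u.
Proof. by rewrite dotvC dotvZl dotvC. Qed.
Lemma dotvNr u v : dotv v (- u) = - dotv v u.
Proof. by rewrite dotvC dotvNl dotvC. Qed.
Lemma dotvBr u v w : dotv v (u - w) = dotv v u - dotv v w.
Proof. by rewrite dotvDr dotvNr. Qed.
Lemma dotv0r u : dotv u 0 = 0.
Proof. by rewrite /dotv trmx0 mulmx0 mxE. Qed.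
Lemma dotv0l u : dotv 0 u = 0.
Proof. by rewrite dotvC dotv0r. Qed.
Lemma sqnE u : sqn u = \sum_i u 0 i ^+ 2.
Proof. by rewrite /sqn /dotv mxE; apply: eq_bigr => i _; rewrite mxE expr2. Qed.
Lemma sqn_ge0 u : 0 <= sqn u.
Proof. by rewrite sqnE sumr_ge0 // => i _; rewrite sqr_ge0. Qed.
Lemma sqn_eq0 u : sqn u = 0 -> u = 0.
Proof.
rewrite sqnE => /eqP; rewrite psumr_eq0 => [/allP H|i _]; last by rewrite sqr_ge0.
apply/rowP => i; rewrite mxE.
have := H i; rewrite mem_index_enum => /(_ isT) /implyP /(_ isT).
by rewrite sqrf_eq0 => /eqP.
Qed.
Lemma sqn0 : sqn (0 : 'rV[R]_n) = 0.
Proof. by rewrite /sqn dotv0r. Qed.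
End Dot.
Lemma lim_le_aux (R : realType) (q : R -> R) (l c K : R) :
  q x @[x --> 0^'] --> l -> (forall t, 0 < t < 1 -> q t <= c + t * K) -> l <= c.
Proof.
move=> ql H; rewrite leNgt; apply/negP => cl.
have e0 : 0 < (l - c) / 2 by rewrite divr_gt0 // subr_gt0.
have /cvgr_gt := ql => /(_ (l - (l - c) / 2)).
rewrite ltrBlDr ltrDl => /(_ e0).
rewrite near_withinE => /nbhs_ballP [d /= d0 Hd].
move: e0 Hd; set e := (l - c) / 2; move=> e0 Hd.
set k := `|K| + 1.
have k0 : 0 < k by rewrite /k ltr_pwDr // normr_ge0.
pose t := Num.min (d / 2) (Num.min (1 / 2) (e / k)).
have t0 : 0 < t.
  rewrite /t !lt_min; apply/andP; split; first lra.
  by apply/andP; split; [lra | rewrite divr_gt0].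

have t1 : t < 1 by rewrite !gt_min; apply/orP; right; apply/orP; left; lra.
have td : t < d by rewrite !gt_min; apply/orP; left; lra.
have tk : t * k <= e.
  by rewrite -ler_pdivlMr // !ge_min; apply/orP; right; apply/orP; right.
have := Hd t; rewrite /ball /= sub0r normrN gtr0_norm // => /(_ td).
move=> /(_ (lt0r_neq0 t0)) => Hq.
have := H t; rewrite t0 t1 => /(_ isT) Hq2.
have : t * K <= t * `|K| by rewrite ler_pM2l // ler_norm.
have : t * `|K| < e.
  apply: lt_le_trans tk; rewrite ltr_pM2l // /k; lra.
move: Hq Hq2 cl; rewrite /e; lra.
Qed.

Lemma le_aux (R : realType) (a b K : R) :
  (forall t, 0 < t < 1 -> a <= b + t * K) -> a <= b.
Proof. by move=> H; apply: (@lim_le_aux R (fun=> a) a b K) => //; exact: cvg_cst. Qed.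

Lemma combE (R : realType) n (t : R) (u x : 'rV[R]_n) :
  t *: u + (1 - t) *: x = t *: (u - x) + x.
Proof. by apply/rowP => i; rewrite !mxE; ring. Qed.

Lemma grad_ineq (R : realType) n (mu : R) g grad :
  is_gradient g grad -> strongly_convex mu (fun u : 'rV[R]_n => (g u)%:E) ->
  forall x u, g x + dotv (grad x) (u - x) + mu / 2 * sqn (u - x) <= g u.
Proof.
move=> Hg Hsc x u; set v := u - x.
have [dg dgv] := Hg x.
have dv := diff_derivable (v:=v) dg.
have ql : (fun h => h^-1 *: ((g \o shift x) (h *: v) - g x)) @ 0^' --> dotv (grad x) v.
  by rewrite -dgv -deriveE //.
suff : dotv (grad x) v <= g u - g x - mu / 2 * sqn v by lra.
apply: (@lim_le_aux R _ _ _ (mu / 2 * sqn v) ql) => t /andP [t0 t1].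
have := Hsc u x t; rewrite t0 t1 => /(_ isT).
rewrite -!EFinM -EFinD lee_fin combE -/v => H.
rewrite /= -[t^-1 *: _]/(t^-1 * _) ler_pdivrMl //.
nra.
Qed.

Section Scal.
Context {R : realType} {mu L : R}.
Hypotheses (mu0 : 0 < mu) (L0 : 0 < L).

Lemma ACG_A0 : ACG_A mu L 0 = 0. Proof. by []. Qed.
Lemma ACG_tau0 : ACG_tau mu L 0 = L^-1. Proof. by []. Qed.
Lemma ACG_AS j : ACG_A mu L j.+1 = ACG_A mu L j + ACG_a mu L j.
Proof. rewrite /ACG_a /ACG_A /ACG_tau /=. case: (ACG_Atau mu L j) => A t /=. by []. Qed.
Lemma ACG_tauS j : ACG_tau mu L j.+1 = ACG_tau mu L j + mu * ACG_a mu L j / L.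
Proof. rewrite /ACG_a /ACG_A /ACG_tau /=. case: (ACG_Atau mu L j) => A t /=. by []. Qed.

Lemma ACG_facts j : 0 <= ACG_A mu L j /\ 0 < ACG_tau mu L j /\
  L * ACG_tau mu L j = 1 + mu * ACG_A mu L j.
Proof.
elim: j => [|j [A0 [t0 E]]].
  rewrite ACG_A0 ACG_tau0; split=> //; split; first by rewrite invr_gt0.
  by rewrite mulfV ?gt_eqF // mulr0 addr0.
have a0 : 0 < ACG_a mu L j.
  rewrite /ACG_a divr_gt0 //; apply: (lt_le_trans t0); rewrite lerDl sqrtr_ge0 //.
rewrite ACG_AS ACG_tauS; split; first by rewrite addr_ge0 // ltW.
split; first by apply: (lt_le_trans t0); rewrite lerDl ltW // divr_gt0 // mulr_gt0.
rewrite mulrDr E; field; exact: lt0r_neq0.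
Qed.

Lemma ACG_a_gt0 j : 0 < ACG_a mu L j.
Proof.
have [A0 [t0 _]] := ACG_facts j.
by rewrite /ACG_a divr_gt0 //; apply: (lt_le_trans t0); rewrite lerDl sqrtr_ge0 //.
Qed.

Lemma ACG_A_gt0 j : 0 < ACG_A mu L j.+1.
Proof. have [A0 _] := ACG_facts j; by rewrite ACG_AS ltr_wpDl // ACG_a_gt0. Qed.

Lemma ACG_a_sq j : ACG_a mu L j ^+ 2 = ACG_tau mu L j * ACG_A mu L j.+1.
Proof.
have [A0 [t0 _]] := ACG_facts j.
rewrite ACG_AS /ACG_a.
set t := ACG_tau mu L j; set A := ACG_A mu L j.
have hs : 0 <= t ^+ 2 + 4 * t * A by rewrite addr_ge0 ?sqr_ge0 // !mulr_ge0 // ltW.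
have := sqr_sqrtr hs; set s := Num.sqrt _ => Hs.
rewrite expr2; rewrite expr2 in Hs.
apply/eqP; rewrite -subr_eq0; apply/eqP.
transitivity ((s * s - (t * t + 4 * t * A)) / 4); last by rewrite Hs subrr mul0r.
by field.
Qed.

Lemma ACG_key j : ACG_a mu L j ^+ 2 * L = ACG_A mu L j.+1 * (1 + ACG_A mu L j * mu).
Proof.
have [_ [_ E]] := ACG_facts j.
rewrite ACG_a_sq; transitivity (ACG_A mu L j.+1 * (L * ACG_tau mu L j)); first by ring.
by rewrite E; ring.
Qed.
End Scal.

Lemma uniq_from_bound (R : realType) n (F : 'rV[R]_n -> \bar R) (y : 'rV[R]_n) (c K : R) :
  0 < K -> F y = c%:E -> (forall u, ((c + K * sqn (u - y))%:E <= F u)%E) ->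
  unique_argmin F y.
Proof.
move=> K0 Fy Hb; split.
  move=> u; rewrite Fy; apply: le_trans (Hb u); rewrite lee_fin lerDl.
  by rewrite mulr_ge0 ?sqn_ge0 // ltW.
move=> u Hu; have := le_trans (Hb u) (Hu y); rewrite Fy lee_fin gerDl => H.
have s0 : sqn (u - y) = 0.
  apply/eqP; rewrite eq_le sqn_ge0 andbT.
  by rewrite -(pmulr_rle0 _ K0).
by apply/eqP; rewrite -subr_eq0; apply/eqP; exact: sqn_eq0.
Qed.

Lemma quad_sc (R : realType) n (f : 'rV[R]_n -> \bar R) c b m :
  (forall u, f u = (c + dotv b u + m / 2 * sqn u)%:E) ->
  quadratic f /\ strongly_convex m f.
Proof.
move=> fE; split.
  exists m%:M, b, c => u; rewrite fE mul_mx_scalar -scalemxAl mxE.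
  by congr (_%:E); rewrite -[(u *m u^T) 0 0]/(sqn u); ring.
move=> x y t _; rewrite !fE -!EFinM -EFinD lee_fin.
rewrite /sqn !(dotvDl, dotvDr, dotvBl, dotvBr, dotvZl, dotvZr, dotvNl, dotvNr) (dotvC y x).
lra.
Qed.


Section PA.
Variables (R : realType) (n : nat) (mu L : R) (g : 'rV[R]_n -> R)
  (grad : 'rV[R]_n -> 'rV[R]_n) (h : 'rV[R]_n -> \bar R) (xt yt : nat -> 'rV[R]_n) (j : nat).
Local Notation xb := (xt j).
Local Notation yb := (yt j.+1).
Hypotheses (mu0 : 0 < mu) (L0 : 0 < L) (hprop : proper_fun h) (hconv : convex_fun h).
Hypotheses (Hg : is_gradient g grad) (Hsc : strongly_convex mu (fun u => (g u)%:E)).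
Hypothesis Hmin : is_argmin (fun u => (lin g grad xb u)%:E + h u
                        + ((L + mu) / 2 * sqn (u - xb))%:E)%E yb.

Lemma hyb_fin : h yb \is a fin_num.
Proof.
have [hN [x1 hx1]] := hprop.
have := Hmin x1; rewrite -(fineK hx1) /=.
case E: (h yb) => [r| |] //.
by have := hN yb; rewrite E.
Qed.

Let hy := fine (h yb).
Let Oy := lin g grad xb yb + hy + (L + mu) / 2 * sqn (yb - xb).

Lemma zE (t : R) (u : 'rV[R]_n) :
  t *: u + (1 - t) *: yb - xb = t *: (u - xb) + (1 - t) *: (yb - xb).
Proof. by apply/rowP => i; rewrite !mxE; ring. Qed.

Lemma KI u : ((Oy + (L + mu) / 2 * sqn (u - yb))%:E <=
  (lin g grad xb u)%:E + h u + ((L + mu) / 2 * sqn (u - xb))%:E)%E.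
Proof.
have [hN _] := hprop.
case Eu: (h u) => [hu| |]; last by have := hN u; rewrite Eu.
2: by rewrite addey // addye // leey.
rewrite -!EFinD lee_fin.
apply: (@le_aux R _ _ ((L + mu) / 2 * sqn (u - yb))) => t /andP [t0 t1].
set z := t *: u + (1 - t) *: yb.
have hz_le : (h z <= (t * hu + (1 - t) * hy)%:E)%E.
  have := hconv u yb t; rewrite t0 t1 Eu -(fineK hyb_fin) => /(_ isT).
  by rewrite mul0r !mul0r sube0 -!EFinM -EFinD.
have [hzr Ehz] : exists r, h z = r%:E.
  case Ez: (h z) => [r| |]; [by exists r | by move: hz_le; rewrite Ez | by have := hN z; rewrite Ez].
move: hz_le; rewrite Ehz lee_fin => hz_le.
have := Hmin z; rewrite Ehz -(fineK hyb_fin) -!EFinD lee_fin -/hy.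
rewrite /Oy /lin /z zE.
have -> : u - yb = (u - xb) - (yb - xb) by apply/rowP => i; rewrite !mxE; ring.
move: (u - xb) (yb - xb) => p q.
rewrite /sqn !(dotvDl, dotvDr, dotvBl, dotvBr, dotvZl, dotvZr, dotvNl, dotvNr) ?(dotvC q p).
move=> H.
rewrite -subr_ge0 -(pmulr_rge0 _ t0).
lra.
Qed.

Let hyf := hyb_fin.
Let Gy := lin g grad xb yb + hy + mu / 2 * sqn (yb - xb).

Lemma F1E u : (ACG_gammat mu g grad h xt j u + (L / 2 * sqn (u - xb))%:E =
  (lin g grad xb u)%:E + h u + ((L + mu) / 2 * sqn (u - xb))%:E)%E.
Proof. by rewrite /ACG_gammat -addeA -EFinD; congr (_ + _%:E); ring. Qed.

Lemma gammat_yb : ACG_gammat mu g grad h xt j yb = Gy%:E.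
Proof. by rewrite /ACG_gammat -(fineK hyf) -!EFinD. Qed.

Lemma gammaE u : ACG_gamma mu L g grad h xt yt j u =
  (Gy + L * dotv (xb - yb) (u - yb) + mu / 2 * sqn (u - yb))%:E.
Proof. by rewrite /ACG_gamma gammat_yb -EFinD addrA. Qed.

Lemma F2E u : (ACG_gamma mu L g grad h xt yt j u + (L / 2 * sqn (u - xb))%:E)%E =
  (Oy + (L + mu) / 2 * sqn (u - yb))%:E.
Proof.
rewrite gammaE -EFinD; congr (_%:E); rewrite /Oy /Gy.
have -> : u - xb = (u - yb) + (yb - xb) by apply/rowP => i; rewrite !mxE; ring.
rewrite -(opprB yb xb).
move: (u - yb) (yb - xb) => w q.
rewrite /sqn !(dotvDl, dotvDr, dotvBl, dotvBr, dotvZl, dotvZr, dotvNl, dotvNr) ?(dotvC q w).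
lra.
Qed.

Lemma Oy_eq : ((lin g grad xb yb)%:E + h yb + ((L + mu) / 2 * sqn (yb - xb))%:E)%E = Oy%:E.
Proof. by rewrite -(fineK hyf) -!EFinD. Qed.

Lemma partA :
  ((forall u, (ACG_gamma mu L g grad h xt yt j u <= ACG_gammat mu g grad h xt j u)%E) /\
   (forall u, (ACG_gammat mu g grad h xt j u <= (g u)%:E + h u)%E) /\
   ACG_gammat mu g grad h xt j yb = ACG_gamma mu L g grad h xt yt j yb /\
   let F1 := fun u => (ACG_gammat mu g grad h xt j u + (L / 2 * sqn (u - xb))%:E)%E in
   let F2 := fun u => (ACG_gamma mu L g grad h xt yt j u + (L / 2 * sqn (u - xb))%:E)%E in
   unique_argmin F1 yb /\ unique_argmin F2 yb /\ F1 yb = F2 yb).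
Proof.
have KI' := KI.
split.
  move=> u; rewrite -(@leeD2rE _ (L / 2 * sqn (u - xb))%:E) //.
  by rewrite F1E F2E.
split.
  move=> u; rewrite /ACG_gammat -addeA (addeC (h u)) addeA -EFinD.
  apply: leeD2r; rewrite lee_fin.
  have := @grad_ineq _ _ _ _ _ Hg Hsc xb u; rewrite /lin; lra.
split.
  by rewrite /ACG_gamma subrr dotv0r sqn0 !mulr0 addr0 adde0.
split.
  apply: (@uniq_from_bound _ _ _ _ Oy ((L + mu) / 2)).
  - by rewrite divr_gt0 // addr_gt0.
  - by rewrite F1E Oy_eq.
  - by move=> u; rewrite F1E; exact: KI'.
split.
  apply: (@uniq_from_bound _ _ _ _ Oy ((L + mu) / 2)).
  - by rewrite divr_gt0 // addr_gt0.
  - by rewrite F2E subrr sqn0 mulr0 addr0.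
  - by move=> u; rewrite F2E.
by rewrite /= F1E F2E Oy_eq subrr sqn0 mulr0 addr0.
Qed.

Lemma gamma_rep : exists c, forall u, ACG_gamma mu L g grad h xt yt j u =
  (c + dotv (L *: (xb - yb) - mu *: yb) u + mu / 2 * sqn u)%:E.
Proof.
exists (Gy - L * dotv (xb - yb) yb + mu / 2 * sqn yb) => u.
rewrite gammaE; congr (_%:E).
move: (xb - yb) => d.
rewrite /sqn !(dotvDl, dotvDr, dotvBl, dotvBr, dotvZl, dotvZr, dotvNl, dotvNr) ?(dotvC yb u) ?(dotvC d u).
lra.
Qed.
End PA.

Lemma GammaS (R : realType) n (mu L : R) g grad h (xt yt : nat -> 'rV[R]_n) j u :
  ACG_Gamma mu L g grad h xt yt j.+1 u =
  ((ACG_A mu L j.+1)^-1%:E * ((ACG_A mu L j)%:E * ACG_Gamma mu L g grad h xt yt j u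
     + (ACG_a mu L j)%:E * ACG_gamma mu L g grad h xt yt j u))%E.
Proof. by []. Qed.

Local Open Scope ereal_scope.

Theorem lemma2p2 (R : realType) (n : nat) (mu L : R)
  (g : 'rV[R]_n -> R) (grad : 'rV[R]_n -> 'rV[R]_n) (h : 'rV[R]_n -> \bar R)
  (x0 : 'rV[R]_n) (x y xt yt : nat -> 'rV[R]_n) :
  (0 < mu)%R -> (0 < L)%R ->
  is_gradient g grad ->
  strongly_convex mu (fun u => (g u)%:E) ->
  smooth_grad (L + mu) grad ->
  proper_fun h -> closed_fun h -> convex_fun h ->
  ACG_run mu L g grad h x0 x y xt yt ->
  let psi := fun u => (g u)%:E + h u in
  let gammat := ACG_gammat mu g grad h xt in
  let gamma := ACG_gamma mu L g grad h xt yt in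
  let Gamma := ACG_Gamma mu L g grad h xt yt in
  forall j : nat,
    (* (a) *)
    ((forall u, gamma j u <= gammat j u) /\ (forall u, gammat j u <= psi u) /\
     gammat j (yt j.+1) = gamma j (yt j.+1) /\
     let F1 := fun u => gammat j u + (L / 2 * sqn (u - xt j))%:E in
     let F2 := fun u => gamma j u + (L / 2 * sqn (u - xt j))%:E in
     unique_argmin F1 (yt j.+1) /\ unique_argmin F2 (yt j.+1) /\
     F1 (yt j.+1) = F2 (yt j.+1)) /\
    (* (b) *)
    (quadratic (gamma j) /\ strongly_convex mu (gamma j) /\
     quadratic (Gamma j.+1) /\ strongly_convex mu (Gamma j.+1)) /\
    (* (c) *)
    unique_argmin (fun u => (ACG_A mu L j)%:E * Gamma j u + (sqn (u - x0) / 2)%:E) (x j).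
Proof.
move=> mu0 L0 Hg Hsc Hsm Hprop Hcl Hconv Hrun psi gammat gamma Gamma.
have [Hx0 [Hy0 Hr]] := Hrun.
have Hmin j := (Hr j).2.1.
have Grep : forall j, exists c b, (forall u, (ACG_A mu L j)%:E * Gamma j u =
     (c + dotv b u + ACG_A mu L j * mu / 2 * sqn u)%:E) /\
     (x j = (1 + ACG_A mu L j * mu)^-1 *: (x0 - b))%R.
  elim=> [|j [c [b [HG Hx]]]].
    exists 0%R, 0%R; split.
      by move=> u; rewrite ACG_A0 mul0e dotv0l !mul0r !add0r.
    by rewrite Hx0 ACG_A0 mul0r addr0 invr1 scale1r subr0.
  have [c' Hc'] := @gamma_rep R n mu L g grad h xt yt j Hprop (Hmin j).
  have A'0 : (ACG_A mu L j.+1 != 0)%R by rewrite gt_eqF // (ACG_A_gt0 mu0 L0).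
  have [A0 _] := ACG_facts mu0 L0 j.
  exists (c + ACG_a mu L j * c')%R,
    (b + ACG_a mu L j *: (L *: (xt j - yt j.+1) - mu *: yt j.+1))%R; split.
    move=> u; rewrite /Gamma GammaS muleA -EFinM mulfV // mul1e HG Hc' -EFinM -EFinD.
    congr (_%:E); rewrite dotvDl dotvZl ACG_AS; ring.
  have [Ext [_ [_ [_ [_ Exj]]]]] := Hr j.
  have s0 : (1 + ACG_A mu L j * mu != 0)%R by rewrite gt_eqF // ltr_pwDl // mulr_ge0 // ltW.
  have Hxb : (x0 - b = (1 + ACG_A mu L j * mu) *: x j)%R by rewrite Hx scalerA mulfV // scale1r.
  have E' : (1 + ACG_A mu L j * mu = ACG_a mu L j ^+ 2 * L / ACG_A mu L j.+1)%R.
    by rewrite (ACG_key mu0 L0) mulrAC mulfV // mul1r.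
  rewrite Exj (addrC (_ * mu)%R 1%R); congr (_ *: _).
  rewrite opprD addrA Hxb Ext E'.
  apply/rowP => i; rewrite !mxE; field; exact: A'0.
move=> j.
split; first exact: (@partA R n mu L g grad h xt yt j mu0 L0 Hprop Hconv Hg Hsc (Hmin j)).
split.
  have [c' Hc'] := @gamma_rep R n mu L g grad h xt yt j Hprop (Hmin j).
  have [Hq1 Hs1] := @quad_sc R n _ _ _ _ Hc'.
  have [c [b [HG _]]] := Grep j.+1.
  have A'0 : (ACG_A mu L j.+1 != 0)%R by rewrite gt_eqF // (ACG_A_gt0 mu0 L0).
  have HGq : forall u, Gamma j.+1 u = ((ACG_A mu L j.+1)^-1 * c
      + dotv ((ACG_A mu L j.+1)^-1 *: b) u + mu / 2 * sqn u)%:E.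
    move=> u; have -> : Gamma j.+1 u = ((ACG_A mu L j.+1)^-1 * ACG_A mu L j.+1)%:E * Gamma j.+1 u.
      by rewrite mulVf // mul1e.
    rewrite EFinM -muleA HG -EFinM dotvZl; congr (_%:E); field; exact: A'0.
  have [Hq2 Hs2] := @quad_sc R n _ _ _ _ HGq.
  by split.
have [c [b [HG Hx]]] := Grep j.
have [A0 _] := ACG_facts mu0 L0 j.
have s0 : (0 < 1 + ACG_A mu L j * mu)%R by rewrite ltr_pwDl // mulr_ge0 // ltW.
have Eb : (b = x0 - (1 + ACG_A mu L j * mu) *: x j)%R.
  by rewrite Hx scalerA mulfV ?gt_eqF // scale1r; apply/rowP => i; rewrite !mxE; ring.
apply: (@uniq_from_bound _ _ _ _
  (c + dotv b (x j) + ACG_A mu L j * mu / 2 * sqn (x j) + sqn (x j - x0) / 2)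
  ((1 + ACG_A mu L j * mu) / 2)).
- by rewrite divr_gt0.
- by rewrite /= HG -EFinD.
move=> u; rewrite HG -EFinD lee_fin Eb.
move: (x j) => xj.
rewrite /sqn !(dotvDl, dotvDr, dotvBl, dotvBr, dotvZl, dotvZr, dotvNl, dotvNr)
  ?(dotvC xj u) ?(dotvC x0 u) ?(dotvC x0 xj).
lra.
Qed.
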